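(* Let $\Gamma$ be the banana graph of genus $g\ge1$ with vertices $v_1,v_2$ and edges $e_1,\dots,e_n$, $n=g+1$. Let $B\in\mathbb Z^{g\times n}$ with $B_{i,1}=1$, $B_{i,i+1}=-1$, other entries $0$, $Q=BB^T$, and for a vertex $\mathbf a$ of $V_Q$ let $\iota_{\mathbf a}$ be the orientation in which $e_i$ goes from $v_2$ to $v_1$ if $(B^T\mathbf a)_i>0$ and from $v_1$ to $v_2$ if $(B^T\mathbf a)_i<0$. For vertices $\mathbf a,\mathbf a'$ of $V_Q$ and $k\in\{1,\dots,g\}$: $\mathbf a\sim\mathbf a'$ with $\mathbf a,\mathbf a'\in[\mathbf k]$ if and only if both $\iota_{\mathbf a}$ and $\iota_{\mathbf a'}$ have exactly $k$ edges outgoing at $v_1$. Equivalently, for $\mathbf a\ne\mathbf a'$, $\mathbf a\sim\mathbf a'$ if and only if the set of edges whose orientation in $\iota_{\mathbf a'}$ differs from that in $\iota_{\mathbf a}$ forms a circuit in $\iota_{\mathbf a}$ (i.e., these edges can be traversed as a closed directed trail in $\iota_{\mathbf a}$, each edge used once).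
   Context: $V_Q=\{\mathbf a\in\mathbb R^g:\ \mathbf a^TQ\mathbf a\le(\mathbf a-\mathbf c)^TQ(\mathbf a-\mathbf c)\ \forall\mathbf c\in\mathbb Z^g\}$; its vertices are $\bigcup_{k=1}^g[\mathbf k]$ where $[\mathbf k]\subset\mathbb R^g$ is the set of vectors with entries in $\{-\tfrac{k}{g+1},\tfrac{g+1-k}{g+1}\}$ having $k$ or $k-1$ entries equal to $\tfrac{g+1-k}{g+1}$. For a vertex $\mathbf a$, $\mathcal D_{\mathbf a,Q}=\{\mathbf c\in\mathbb Z^g:\mathbf a^TQ\mathbf a=(\mathbf a-\mathbf c)^TQ(\mathbf a-\mathbf c)\}$, and $\mathbf a\sim\mathbf a'$ iff $\mathbf a'=\mathbf a-\mathbf c_0$ for some $\mathbf c_0\in\mathcal D_{\mathbf a,Q}$. The orientations $\iota_{\mathbf a}$ are exactly the strongly connected orientations of $\Gamma$. *)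

(* Defs.v *)
(* Coordinates are rationals (all vertices of V_Q and all
   lattice translates are rational). *)
From HB Require Import structures.
From mathcomp Require Import all_boot all_order all_algebra.
Set Implicit Arguments. Unset Strict Implicit. Unset Printing Implicit Defensive.
Import Order.TTheory GRing.Theory Num.Theory.
Local Open Scope ring_scope.

(* Banana graph of genus g: vertices v1, v2 ('I_2), edges e_1..e_n, n = g+1,
   indexed by 'I_(g.+1) (edge e_{j+1} is index j). *)
Definition v1 : 'I_2 := ord0.
Definition v2 : 'I_2 := ord_max.

(* B in Z^{g x n}: B_{i,1} = 1, B_{i,i+1} = -1, other entries 0 (0-based:
   column 0 is e_1, column i.+1 is e_{i+2}). *)
Definition bananaB (g : nat) : 'M[int]_(g, g.+1) :=
  \matrix_(i < g, j < g.+1)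
     (if (j == 0 :> nat) then 1 else if (j == i.+1 :> nat) then -1 else 0).

Definition Bq (g : nat) : 'M[rat]_(g, g.+1) := map_mx (fun z : int => z%:~R) (bananaB g).

Definition bananaQ (g : nat) : 'M[rat]_g := Bq g *m (Bq g)^T.

Definition qform (g : nat) (Q : 'M[rat]_g) (x : 'cV[rat]_g) : rat :=
  (x^T *m Q *m x) 0 0.

Definition intvec (g : nat) (c : 'cV[int]_g) : 'cV[rat]_g :=
  map_mx (fun z : int => z%:~R) c.

Definition kset (g k : nat) (a : 'cV[rat]_g) : Prop :=
  let lo : rat := - (k%:R / (g.+1)%:R) in
  let hi : rat := ((g.+1 - k)%N)%:R / (g.+1)%:R in
  (forall i : 'I_g, a i 0 = lo \/ a i 0 = hi) /\
  (#|[set i : 'I_g | a i 0 == hi]| = k \/ #|[set i : 'I_g | a i 0 == hi]| = k.-1).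
Arguments kset : clear implicits.

(* Vertices of V_Q: the union of [k], k = 1..g (as given in the context). *)
Definition is_vertex (g : nat) (a : 'cV[rat]_g) : Prop :=
  exists2 k : nat, (1 <= k <= g)%N & kset g k a.

Definition DaQ (g : nat) (a : 'cV[rat]_g) (c : 'cV[int]_g) : Prop :=
  qform (bananaQ g) a = qform (bananaQ g) (a - intvec c).

Definition simV (g : nat) (a a' : 'cV[rat]_g) : Prop :=
  exists c0 : 'cV[int]_g, DaQ a c0 /\ a' = a - intvec c0.

Definition BTa (g : nat) (a : 'cV[rat]_g) (j : 'I_g.+1) : rat :=
  ((Bq g)^T *m a) j 0.

(* Orientation iota_a: edge j ↦ (tail, head).  e_j goes v2 -> v1 if
   (B^T a)_j > 0 and v1 -> v2 if (B^T a)_j < 0.  (The value 0 never occurs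
   for vertices of V_Q; we then arbitrarily pick v1 -> v2.) *)
Definition orient (g : nat) (a : 'cV[rat]_g) (j : 'I_g.+1) : 'I_2 * 'I_2 :=
  if 0 < BTa a j then (v2, v1) else (v1, v2).

Definition outdeg_v1 (g : nat) (o : 'I_g.+1 -> 'I_2 * 'I_2) : nat :=
  #|[set j : 'I_g.+1 | (o j).1 == v1]|.

Definition is_circuit (g : nat) (o : 'I_g.+1 -> 'I_2 * 'I_2)
    (S : {set 'I_g.+1}) : Prop :=
  exists s : seq 'I_g.+1,
    [/\ s != [::], uniq s, (forall j, (j \in s) = (j \in S)) &
        cycle (fun e f => (o e).2 == (o f).1) s].

Definition diff_edges (g : nat) (a a' : 'cV[rat]_g) : {set 'I_g.+1} :=
  [set j : 'I_g.+1 | orient a' j != orient a j].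

(* Main.v *)
Require Import Defs.
From HB Require Import structures.
From mathcomp Require Import all_boot all_order all_algebra.
From mathcomp Require Import zify ring lra.
Import Order.TTheory GRing.Theory Num.Theory.
Set Implicit Arguments. Unset Strict Implicit. Unset Printing Implicit Defensive.
Local Open Scope ring_scope.



Lemma card_sumb (T:finType) (P : pred T) : #|[set j | P j]| = (\sum_j (P j : nat))%N.
Proof. rewrite cardsE -sum1_card big_mkcond /=. apply: eq_bigr => i _.
by rewrite unfold_in; case: (P i). Qed.

Lemma card_split_ord (n : nat) (P : pred 'I_n.+1) :
  #|[set j | P j]| = (P ord0 + #|[set i : 'I_n | P (lift ord0 i)]|)%N.
Proof. by rewrite !card_sumb big_ord_recl. Qed.

Definition ori (T : Type) (p : T -> bool) (j : T) : 'I_2 * 'I_2 :=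
  if p j then (v2, v1) else (v1, v2).

Lemma ori1 (T : Type) (p : T -> bool) j : ((ori p j).1 == v1) = ~~ p j.
Proof. by rewrite /ori; case: (p j). Qed.
Lemma ori2 (T : Type) (p : T -> bool) j : ((ori p j).2 == v1) = p j.
Proof. by rewrite /ori; case: (p j). Qed.

Definition rr (T : Type) (p : T -> bool) := fun e f => (ori p e).2 == (ori p f).1.

Lemma path_count (T : Type) (p : T -> bool) x s :
  path (rr p) x s -> count p (belast x s) = count (fun j => ~~ p j) s.
Proof.
elim: s x => [|y s IH] x //= /andP[hr hp].
rewrite (IH y hp). move: hr; rewrite /rr /ori.
by case: (p x); case: (p y).
Qed.

Lemma uniq_count (T : finType) (P : pred T) (s : seq T) (S : {set T}) :
  uniq s -> (forall j, (j \in s) = (j \in S)) ->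
  count P s = #|[set j in S | P j]|.
Proof.
move=> us hs. rewrite -size_filter.
have u2 : uniq (filter P s) by rewrite filter_uniq.
rewrite -(card_uniqP u2). apply: eq_card => j. by rewrite mem_filter inE hs andbC.
Qed.

Fixpoint il (T : Type) (A B : seq T) : seq T :=
  match A, B with a :: A', b :: B' => a :: b :: il A' B' | _, _ => [::] end.

Lemma il_path (T : Type) (p : T -> bool) (A B : seq T) x :
  size A = size B -> all (fun a => ~~ p a) A -> all p B -> p x ->
  path (rr p) x (il A B) && p (last x (il A B)).
Proof.
elim: A B x => [|a A IH] [|b B] x //= [hs] /andP[ha hA] /andP[hb hB] hx.
have := IH B b hs hA hB hb => /andP[-> ->].
by rewrite /rr /ori hx (negbTE ha) hb.
Qed.

Lemma mem_il (T : eqType) (A B : seq T) j : size A = size B ->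
  (j \in il A B) = (j \in A) || (j \in B).
Proof.
elim: A B => [|a A IH] [|b B] //= [hs]. rewrite !inE IH //.
by case: (j == a); case: (j == b); case: (j \in A); case: (j \in B).
Qed.

Lemma uniq_il (T : eqType) (A B : seq T) : size A = size B -> uniq (A ++ B) ->
  uniq (il A B).
Proof.
elim: A B => [|a A IH] [|b B] //= [hs].
move=> /andP[u1 u2].
move: u1 u2; rewrite !mem_cat !cat_uniq /= !inE !negb_or.
move=> /and3P[h1 h2 h3] /and4P[h4 /andP[h5 h6] h7 h8].
rewrite !mem_il // !negb_or h2 h1 h3 h7 (negbTE h5) /=.
apply: IH => //. by rewrite cat_uniq h4 h6 h8.
Qed.

Lemma circuit_iff (n : nat) (p : 'I_n.+1 -> bool) (S : {set 'I_n.+1}) :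
  is_circuit (ori p) S <->
  S != set0 /\ #|[set j in S | ~~ p j]| = #|[set j in S | p j]|.
Proof.
split.
  case=> s [sn us hs hc]; case: s sn us hs hc => [//|x s] _ us hs hc. split.
    apply/set0Pn; exists x; by rewrite -hs inE eqxx.
  rewrite -(uniq_count _ us hs) -(uniq_count _ us hs).
  have := path_count hc; rewrite belast_rcons -cats1 count_cat /= => ->.
  by rewrite addn0 addnC.
case=> /set0Pn[x xS] hb.
set A := enum [set j in S | ~~ p j]; set B := enum [set j in S | p j].
have sAB : size A = size B by rewrite /A /B -!cardE.
have hA : all (fun a => ~~ p a) A.
  by apply/allP => j; rewrite mem_enum inE => /andP[].
have hB : all p B.
  by apply/allP => j; rewrite mem_enum inE => /andP[].
have hpos : (0 < size A)%N /\ (0 < size B)%N.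
  case px: (p x).
    have h0 : (0 < size B)%N.
      rewrite -has_predT; apply/hasP; by exists x; rewrite // mem_enum inE xS px.
    by rewrite sAB.
  have h0 : (0 < size A)%N.
    rewrite -has_predT; apply/hasP; by exists x; rewrite // mem_enum inE xS px.
  by rewrite -sAB.
exists (il A B); split.
- by case: hpos; case: (A) (B) sAB => [|a A'] [|b B'].
- apply: uniq_il => //. rewrite cat_uniq !enum_uniq /=.
  rewrite andbT; apply/hasPn => j; rewrite !mem_enum !inE => /andP[_ pj]; by rewrite pj andbF.
- move=> j; rewrite mem_il // !mem_enum !inE. by case: (j \in S); case: (p j).
- move: (A) (B) sAB hA hB hpos => [|a A'] [|b B'] //= [hs] /andP[ha hA'] /andP[hb0 hB'] _.
  rewrite rcons_path /=.
  have := il_path hs hA' hB' hb0 => /andP[h1 h2].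
  rewrite h1 /rr /ori hb0 (negbTE ha) /=.
  by move: h2; rewrite /ori; case: (p _).
Qed.

Lemma bal_iff (T : finType) (p p' : T -> bool) :
  #|[set j | ~~ p j]| = #|[set j | ~~ p' j]| <->
  #|[set j in [set j | p' j != p j] | ~~ p j]| =
  #|[set j in [set j | p' j != p j] | p j]|.
Proof.
rewrite !card_sumb.
have e1 : (\sum_j (~~ p j : nat) = \sum_j ((p' j != p j) && ~~ p j : nat)
   + \sum_j ((p' j == p j) && ~~ p j : nat))%N.
  rewrite -big_split /=; apply: eq_bigr => j _; by case: (p j); case: (p' j).
have e2 : (\sum_j (~~ p' j : nat) = \sum_j ((p' j != p j) && p j : nat)
   + \sum_j ((p' j == p j) && ~~ p j : nat))%N.
  rewrite -big_split /=; apply: eq_bigr => j _; by case: (p j); case: (p' j).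
have e3 : (\sum_j ((j \in [set j | p' j != p j]) && ~~ p j : nat) = \sum_j ((p' j != p j) && ~~ p j : nat))%N.
  by apply: eq_bigr => j _; rewrite inE.
have e4 : (\sum_j ((j \in [set j | p' j != p j]) && p j : nat) = \sum_j ((p' j != p j) && p j : nat))%N.
  by apply: eq_bigr => j _; rewrite inE.
rewrite e1 e2 e3 e4. split; lia.
Qed.



Definition pos (g : nat) (a : 'cV[rat]_g) (j : 'I_g.+1) : bool := 0 < BTa a j.
Lemma orientE g (a : 'cV[rat]_g) : orient a = ori (pos a).
Proof. by []. Qed.

Lemma BTa0 g (a : 'cV[rat]_g) : BTa a ord0 = \sum_i a i 0.
Proof.
rewrite /BTa mxE; apply: eq_bigr => i _.
by rewrite !mxE /= mul1r.
Qed.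

Lemma BTaS g (a : 'cV[rat]_g) i : BTa a (lift ord0 i) = - a i 0.
Proof.
rewrite /BTa mxE (bigD1 i) //= big1 ?addr0.
  by rewrite !mxE /= eqxx mulN1r.
move=> j hj; rewrite !mxE /=.
have -> : (bump 0 i == j.+1)%N = false.
  by apply/negbTE; move: hj; apply: contra => /eqP [] /val_inj ->.
by rewrite mul0r.
Qed.

Lemma qformE g (x : 'cV[rat]_g) :
  qform (bananaQ g) x = (\sum_i x i 0) ^+ 2 + \sum_i (x i 0) ^+ 2.
Proof.
rewrite /qform /bananaQ.
have -> : x^T *m (Bq g *m (Bq g)^T) *m x = ((Bq g)^T *m x)^T *m ((Bq g)^T *m x).
  by rewrite trmx_mul trmxK !mulmxA.
have hb j : ((Bq g)^T *m x)^T 0 j * ((Bq g)^T *m x) j 0 = BTa x j ^+ 2.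
  by rewrite [in LHS]mxE expr2.
rewrite mxE (eq_bigr _ (fun j _ => hb j)) big_ord_recl BTa0.
by congr (_ + _); apply: eq_bigr => i _; rewrite BTaS sqrrN.
Qed.

Definition lo (g k : nat) : rat := - (k%:R / (g.+1)%:R).
Definition hi (g k : nat) : rat := ((g.+1 - k)%N)%:R / (g.+1)%:R.

Lemma hiE g k : (k <= g.+1)%N -> hi g k = lo g k + 1.
Proof.
move=> hk; rewrite /hi /lo natrB //.
have hN : ((g.+1)%:R : rat) != 0 by rewrite pnatr_eq0.
by rewrite mulrBl divff // addrC.
Qed.

Lemma sum_bool g (c : rat) (f : 'I_g -> bool) :
  \sum_i (c + (f i)%:R) = c *+ g + (#|[set i | f i]|)%:R.
Proof.
rewrite big_split /= sumr_const card_ord; congr (_ + _).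
by rewrite card_sumb natr_sum.
Qed.

Lemma sum_bool2 g (c : rat) (f : 'I_g -> bool) :
  \sum_i (c + (f i)%:R) ^+ 2 = c ^+ 2 *+ g + (#|[set i | f i]|)%:R * ((c + 1) ^+ 2 - c ^+ 2).
Proof.
have -> : c ^+ 2 *+ g = \sum_(i < g) c ^+ 2 by rewrite sumr_const card_ord.
rewrite card_sumb natr_sum mulr_suml -big_split /=.
apply: eq_bigr => i _. case: (f i) => /=; ring.
Qed.

Definition qv (g k : nat) : rat :=
  (k%:R / (g.+1)%:R) * (g.+1)%:R * (1 - k%:R / (g.+1)%:R).

Definition mcount g k (a : 'cV[rat]_g) := #|[set i | a i 0 == hi g k]|.

Lemma vfacts g k (a : 'cV[rat]_g) : (1 <= k <= g)%N -> kset g k a ->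
  [/\ forall i, a i 0 = lo g k + (a i 0 == hi g k)%:R,
      forall i, pos a (lift ord0 i) = (a i 0 != hi g k),
      outdeg_v1 (orient a) = k &
      qform (bananaQ g) a = qv g k].
Proof.
move=> /andP[k1 kg] [hv hm].
have hv' : forall i, a i 0 = lo g k \/ a i 0 = hi g k := hv.
have hm' : mcount k a = k \/ mcount k a = k.-1 := hm.
have hN : (0 : rat) < (g.+1)%:R by rewrite ltr0n.
have hNG : ((g.+1)%:R : rat) = g%:R + 1 by rewrite -addn1 natrD.
set t := (k%:R / (g.+1)%:R : rat).
have ht0 : 0 < t by rewrite divr_gt0 // ltr0n.
have ht1 : t < 1 by rewrite ltr_pdivrMr // mul1r ltr_nat ltnS.
have hK : (k%:R : rat) = t * (g.+1)%:R by rewrite /t divfK // gt_eqF.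
have hlo : lo g k = - t by [].
have hhi : hi g k = 1 - t.
  rewrite hiE; last by lia.
  by rewrite hlo addrC.
have he : forall i, a i 0 = lo g k + (a i 0 == hi g k)%:R.
  move=> i; case: (hv' i) => ->; rewrite ?eqxx.
    have -> : (lo g k == hi g k) = false.
      by apply/negbTE; rewrite hhi hlo; apply/eqP => h; move: (congr1 (fun x => x + t) h); rewrite addNr subrK => /eqP; rewrite eq_sym oner_eq0.
    by rewrite addr0.
  by rewrite hhi hlo addrC.
have hpos i : pos a (lift ord0 i) = (a i 0 != hi g k).
  rewrite /pos BTaS. case: (hv' i) => ->; rewrite ?eqxx.
    rewrite hlo opprK ht0. apply/esym/eqP; rewrite hhi => h.
    by move: (congr1 (fun x => x + t) h); rewrite addNr subrK => /eqP; rewrite eq_sym oner_eq0.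
  by rewrite hhi opprB subr_gt0 ltNge (ltW ht1).
have hMr : (mcount k a)%:R = t * (g.+1)%:R \/ (mcount k a)%:R = t * (g.+1)%:R - 1 :> rat.
  case: hm' => ->; [by left | right].
  by rewrite -hK -subn1 natrB.
have hS : BTa a ord0 = - t * g%:R + (mcount k a)%:R.
  by rewrite BTa0 (eq_bigr _ (fun i _ => he i)) sum_bool hlo mulr_natr.
split => //.
- rewrite /outdeg_v1 orientE.
  have -> : #|[set j | (ori (pos a) j).1 == v1]| = #|[set j | ~~ pos a j]|.
    by apply: eq_card => j; rewrite !inE ori1.
  rewrite card_split_ord.
  have -> : #|[set i : 'I_g | ~~ pos a (lift ord0 i)]| = mcount k a.
    by apply: eq_card => j; rewrite !inE hpos negbK.
  rewrite /pos hS.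
  case: hm' hMr => hm1 [] hM; rewrite hM hNG.
  + have -> : - t * g%:R + t * (g%:R + 1) = t by ring.
    by rewrite ht0 hm1.
  + exfalso; move: hM; rewrite hm1 hK => /eqP. rewrite -subr_eq0.
    have -> : t * (g.+1)%:R - (t * (g.+1)%:R - 1) = 1 by ring.
    by rewrite oner_eq0.
  + exfalso; move: hM; rewrite hm1 -subn1 natrB // hK => /eqP. rewrite -subr_eq0.
    have -> : t * (g.+1)%:R - 1%:R - t * (g.+1)%:R = - 1 by ring.
    by rewrite oppr_eq0 oner_eq0.
  + have -> : - t * g%:R + (t * (g%:R + 1) - 1) = t - 1 by ring.
    have -> : (0 < t - 1) = false by apply/negbTE; rewrite -leNgt subr_le0 ltW.
    rewrite hm1 /=. lia.
- rewrite qformE (eq_bigr _ (fun i _ => he i)) sum_bool.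
  rewrite (eq_bigr _ (fun i _ => congr1 (fun x => x ^+ 2) (he i))) sum_bool2 hlo /qv -/t.
  rewrite -/(mcount k a).
  case: hMr => ->; rewrite hNG; ring.
Qed.

Lemma kset_same g k k' (a a' : 'cV[rat]_g) (c : 'cV[int]_g) : (1 <= g)%N ->
  (1 <= k <= g)%N -> (1 <= k' <= g)%N -> kset g k a -> kset g k' a' ->
  a' = a - intvec c -> k = k'.
Proof.
move=> hg hk hk' ha ha' hc.
have [he _ _ _] := vfacts hk ha.
have [he' _ _ _] := vfacts hk' ha'.
pose i0 : 'I_g := Ordinal hg.
have e0 : a' i0 0 = a i0 0 - (c i0 0)%:~R by rewrite hc !mxE.
move: e0; rewrite he he' /lo.
set b := (a i0 0 == hi g k); set b' := (a' i0 0 == hi g k').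
set z := c i0 0.
pose w : int := b%:Z - b'%:Z - z.
have hw : w%:~R = b%:R - b'%:R - z%:~R :> rat by rewrite /w !intrB.
have hN : (0 : rat) < (g.+1)%:R by rewrite ltr0n.
have hNn : ((g.+1)%:R : rat) != 0 by rewrite gt_eqF.
have hKu : (k%:R : rat) = k%:R / (g.+1)%:R * (g.+1)%:R by rewrite divfK.
have hKu' : (k'%:R : rat) = k'%:R / (g.+1)%:R * (g.+1)%:R by rewrite divfK.
set u := (k%:R / (g.+1)%:R : rat) in hKu *.
set u' := (k'%:R / (g.+1)%:R : rat) in hKu' *.
move=> e.
have e2 : (k%:R - k'%:R : rat) = w%:~R * (g.+1)%:R.
  rewrite hKu hKu' -mulrBl hw; congr (_ * _). lra.
have hk1 : (1 : rat) <= k%:R by rewrite ler1n; case/andP: hk.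
have hk2 : (k%:R : rat) <= g%:R by rewrite ler_nat; case/andP: hk.
have hk1' : (1 : rat) <= k'%:R by rewrite ler1n; case/andP: hk'.
have hk2' : (k'%:R : rat) <= g%:R by rewrite ler_nat; case/andP: hk'.
have hNG : ((g.+1)%:R : rat) = g%:R + 1 by rewrite -addn1 natrD.
rewrite hNG in e2.
case: (ltrgtP w 0) => hw0.
- have : (w%:~R : rat) <= -1 by rewrite -(intrN _ 1) ler_int; lia.
  move=> hW; exfalso.
  have hG : (0 : rat) <= g%:R by [].
  have h0 : (0 : rat) <= (-1 - w%:~R) * (g%:R + 1).
    by apply: mulr_ge0; lra.
  clear -e2 h0 hk1 hk2 hk1' hk2'; nra.
- have : (1 : rat) <= w%:~R by rewrite ler1z; lia.
  move=> hW; exfalso.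
  have hG : (0 : rat) <= g%:R by [].
  have h0 : (0 : rat) <= (w%:~R - 1) * (g%:R + 1).
    by apply: mulr_ge0; lra.
  clear -e2 h0 hk1 hk2 hk1' hk2'; nra.
- by move/eqP: e2; rewrite hw0 mul0r subr_eq0 eqr_nat => /eqP.
Qed.

Lemma sim_same g k (a a' : 'cV[rat]_g) : (1 <= k <= g)%N ->
  kset g k a -> kset g k a' -> simV a a'.
Proof.
move=> hk ha ha'.
have [he _ _ hq] := vfacts hk ha.
have [he' _ _ hq'] := vfacts hk ha'.
pose c : 'cV[int]_g := \matrix_(i, j) ((a i 0 == hi g k)%:Z - (a' i 0 == hi g k)%:Z).
have hc : a' = a - intvec c.
  apply/matrixP => i j; rewrite (ord1 j) !mxE.
  have Ea := he i; have Ea' := he' i.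
  set b := (a i 0 == hi g k) in Ea *; set b' := (a' i 0 == hi g k) in Ea' *.
  rewrite Ea Ea' intrB /=. 
  have -> : (b%:Z)%:~R = b%:R :> rat by [].
  have -> : (b'%:Z)%:~R = b'%:R :> rat by [].
  ring.
exists c; split => //.
by rewrite /DaQ -hc hq hq'.
Qed.



Lemma outdegE g (a : 'cV[rat]_g) : outdeg_v1 (orient a) = #|[set j | ~~ pos a j]|.
Proof. by rewrite /outdeg_v1 orientE; apply: eq_card => j; rewrite !inE ori1. Qed.

Lemma kset_outdeg g k (a : 'cV[rat]_g) : is_vertex a -> outdeg_v1 (orient a) = k -> kset g k a.
Proof. case=> k1 hk1 hs; have [_ _ ho _] := vfacts hk1 hs; by rewrite ho => <-. Qed.

Lemma diffE g (a a' : 'cV[rat]_g) : diff_edges a a' = [set j | pos a' j != pos a j].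
Proof.
apply/setP => j; rewrite !inE /orient /pos.
by case: (0 < BTa a j); case: (0 < BTa a' j).
Qed.

Theorem corollary3p11 (g : nat) (hg : (1 <= g)%N) :
  (forall (a a' : 'cV[rat]_g), is_vertex a -> is_vertex a' ->
     forall k : nat, (1 <= k <= g)%N ->
       ((simV a a' /\ kset g k a /\ kset g k a') <->
        (outdeg_v1 (orient a) = k /\ outdeg_v1 (orient a') = k)))
  /\
  (forall (a a' : 'cV[rat]_g), is_vertex a -> is_vertex a' -> a != a' ->
       (simV a a' <-> is_circuit (orient a) (diff_edges a a'))).
Proof.
split.
  move=> a a' va va' k hk; split.
    case=> _ [ha ha']; have [_ _ o _] := vfacts hk ha; have [_ _ o' _] := vfacts hk ha'.
    by [].
  case=> o o'; have ha := kset_outdeg va o; have ha' := kset_outdeg va' o'.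
  by split => //; apply: sim_same hk ha ha'.
move=> a a' [k hk ha] [k' hk' ha'] hne.
have [he hp o _] := vfacts hk ha.
have [he' hp' o' _] := vfacts hk' ha'.
rewrite orientE diffE circuit_iff.
split.
  case=> c [_ hc].
  have ekk := kset_same hg hk hk' ha ha' hc.
  rewrite -ekk in he' hp' o'.
  split.
    case: (pickP (fun i => a i 0 != a' i 0)) => [i hi | hall]; last first.
      exfalso; apply: (negP hne); apply/eqP/matrixP => i j; rewrite (ord1 j).
      by move: (hall i) => /negbFE/eqP.
    apply/set0Pn; exists (lift ord0 i); rewrite inE hp hp'.
    move: (he i) (he' i) hi.
    case: (a i 0 == hi g k); case: (a' i 0 == hi g k) => //= -> ->; by rewrite eqxx.
  apply: (proj1 (bal_iff (pos a) (pos a'))). by rewrite -!outdegE o o'.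
case=> _ /(proj2 (bal_iff (pos a) (pos a'))); rewrite -!outdegE o => ho.
have ekk : k' = k by rewrite -o' -ho.
rewrite ekk in ha'.
exact: sim_same hk ha ha'.
Qed.
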